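(* For $h,r>0$ with $\frac hr\le\omega$, let $\Pi(h,r)>0$ be the largest positive solution of $\Pi\cosh\frac h\Pi=r$. Then $$\sup\left\{\sinh\frac{h}{\Pi(h,r)}:\ h,r>0,\ \frac hr\le\omega\right\}<z_0,$$ where $z_0=\sqrt{\tfrac12(\sqrt5-1)}$.
   Context: Let $\Xi$ be the unique positive solution of $\xi\tanh\frac1\xi+\mathrm{sech}^2\frac1\xi=\xi$, and $\omega=\frac{1}{\Xi\cosh(1/\Xi)}$ (numerically $0.52<\omega<0.53$). *)

(* Defs.v *)
From Stdlib Require Export Reals.
Open Scope R_scope.

(* Xi is a positive solution of  xi*tanh(1/xi) + sech^2(1/xi) = xi
   (the paper asserts this positive solution is unique). *)
Definition Xi_spec (xi : R) : Prop :=
  0 < xi /\ xi * tanh (/ xi) + / (cosh (/ xi))^2 = xi.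

Definition omega (xi : R) : R := / (xi * cosh (/ xi)).

Definition is_Pi (h r P : R) : Prop :=
  0 < P /\ P * cosh (h / P) = r /\
  (forall Q, 0 < Q -> Q * cosh (h / Q) = r -> Q <= P).

Definition z0 : R := sqrt (/ 2 * (sqrt 5 - 1)).

Definition sinh_set (xi : R) (s : R) : Prop :=
  exists h r P, 0 < h /\ 0 < r /\ h / r <= omega xi /\ is_Pi h r P /\
    s = sinh (h / P).

(* Main.v *)
Require Import Defs.
From Stdlib Require Import Reals Lra Lia Psatz.
Open Scope R_scope.
Lemma exp8 x : exp x = (exp (x/8))^8.
Proof.
  replace x with (x/8+x/8+x/8+x/8+x/8+x/8+x/8+x/8) at 1 by field.
  rewrite !exp_plus. ring.
Qed.

Lemma exp_lb x : 0 <= x -> (1 + x/8)^8 <= exp x.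
Proof.
  intros Hx. rewrite exp8. apply pow_incr. split. lra.
  apply exp_ineq1_le.
Qed.

Lemma expn_lb x : 0 <= x <= 8 -> (1 - x/8)^8 <= exp (-x).
Proof.
  intros Hx. rewrite exp8. apply pow_incr. split. lra.
  replace (-x/8) with (-(x/8)) by field.
  pose proof (exp_ineq1_le (-(x/8))). lra.
Qed.

Lemma cosh_pos x : 0 < cosh x.
Proof. unfold cosh. pose proof (exp_pos x). pose proof (exp_pos (-x)). lra. Qed.

Lemma cosh_ge1 x : 1 <= cosh x.
Proof.
  unfold cosh. rewrite exp_Ropp. pose proof (exp_pos x) as H.
  set (E := exp x) in *.
  assert (E + /E - 2 = (E-1)^2/E) by (field; lra).
  assert (0 <= (E-1)^2/E).
  { unfold Rdiv. apply Rmult_le_pos. apply pow2_ge_0. left. apply Rinv_0_lt_compat. exact H. }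
  lra.
Qed.

Lemma sinh_le x y : x <= y -> sinh x <= sinh y.
Proof.
  intros H. unfold sinh.
  destruct H as [H|H].
  - assert (exp x < exp y) by (apply exp_increasing; lra).
    assert (exp (-y) < exp (-x)) by (apply exp_increasing; lra). lra.
  - subst; lra.
Qed.

Lemma sinh065 : sinh (65/100) <= 74/100 /\ (sinh (65/100))^2 < / 2 * (sqrt 5 - 1).
Proof.
  pose proof (expn_lb (65/100) ltac:(lra)) as H1.
  pose proof (exp_pos (65/100)).
  assert (Hm : exp (65/100) * exp (-(65/100)) = 1) by (rewrite <- exp_plus; replace (65/100 + - (65/100)) with 0 by ring; apply exp_0).
  assert (Hs : 2236/1000 < sqrt 5).
  { apply Rsqr_incrst_0; try lra. 2: apply sqrt_pos. rewrite Rsqr_sqrt by lra. unfold Rsqr. lra. }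
  set (E := exp (65/100)) in *. set (F := exp (-(65/100))) in *.
  assert (E <= 19700/10000).
  { assert (E * ((1 - 65 / 100 / 8) ^ 8) <= E * F) by (apply Rmult_le_compat_l; lra).
    lra. }
  assert (HE1 : 1 + 65/100 <= E) by apply exp_ineq1_le.
  assert (HF1 : F < 1). { unfold F. rewrite <- exp_0. apply exp_increasing. lra. }
  assert (Hc : 5076/10000 <= (1 - 65 / 100 / 8) ^ 8) by (simpl; lra).
  unfold sinh. fold E F. split. lra.
  assert (((E - F)/2)^2 <= (7315/10000)^2) by (apply pow_incr; lra).
  lra.
Qed.
Lemma g_mono a b : 0 <= a < b -> b <= 65/100 -> a * cosh b < b * cosh a.
Proof.
  intros Ha Hb.
  destruct (MVT_cor2 (fun x => x * cosh b - b * cosh x) (fun x => cosh b - b * sinh x) a b)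
    as [c [Hc1 Hc2]]; [lra| |].
  - intros c _.
    replace (cosh b - b * sinh c) with (1 * cosh b - b * sinh c) by ring.
    apply (derivable_pt_lim_minus (fun x => x * cosh b) (fun x => b * cosh x)).
    + apply (derivable_pt_lim_scal_right id). apply derivable_pt_lim_id.
    + apply (derivable_pt_lim_scal cosh). apply derivable_pt_lim_cosh.
  - simpl in Hc1.
    assert (sinh c <= sinh (65/100)) by (apply sinh_le; lra).
    assert (sinh 0 <= sinh c) by (apply sinh_le; lra).
    assert (sinh 0 = 0) by (unfold sinh; rewrite Ropp_0; lra).
    destruct sinh065 as [Hs _].
    pose proof (cosh_ge1 b).
    assert (b * sinh c <= 65/100 * (74/100)) by nra.
    assert (0 < (cosh b - b * sinh c) * (b - a)) by (apply Rmult_lt_0_compat; lra).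
    lra.
Qed.

Lemma cont_cosh x : continuity_pt cosh x.
Proof. apply derivable_continuous_pt. exists (sinh x). apply derivable_pt_lim_cosh. Qed.

Lemma cont_id x : continuity_pt (fun y => y) x.
Proof. apply derivable_continuous_pt. exists 1. apply derivable_pt_lim_id. Qed.

Theorem lemma4p2 (xi : R) (Hxi : Xi_spec xi)
  (Huniq : forall y, Xi_spec y -> y = xi) :
  exists s, is_lub (sinh_set xi) s /\ s < z0.
Proof.
  destruct Hxi as [Hx Heq].
  set (u := / xi) in *.
  assert (Hu : 0 < u) by (apply Rinv_0_lt_compat; lra).
  assert (Hxu : xi = / u) by (unfold u; rewrite Rinv_inv; reflexivity).
  pose proof (cosh_pos u) as HC.
  assert (HSC : sinh u * cosh u + u = (cosh u)^2).
  { assert (H : u * (cosh u)^2 * (xi * tanh u + / (cosh u)^2) = u * (cosh u)^2 * xi)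
      by (rewrite Heq; reflexivity).
    rewrite Hxu in H. unfold tanh in H.
    replace (u * cosh u ^ 2 * (/ u * (sinh u / cosh u) + / cosh u ^ 2)) with (sinh u * cosh u + u) in H
      by (field; split; lra).
    rewrite H. field. lra. }
  assert (Hu2 : u = (1 + / (exp u)^2) / 2).
  { pose proof (exp_pos u) as HE.
    unfold sinh, cosh in HSC. rewrite exp_Ropp in HSC.
    set (E := exp u) in *.
    replace u with ((E + / E) / 2 * (E + / E) / 2 - (E - / E) / 2 * ((E + / E) / 2)) at 1 by lra.
    field. lra. }
  assert (Hlo : 1/2 < u).
  { pose proof (exp_pos u). assert (0 < / (exp u)^2) by (apply Rinv_0_lt_compat; apply pow_lt; lra). lra. }
  assert (Hhi : u < 65/100).
  { destruct (Rlt_or_le u (65/100)) as [H|H]; [exact H|exfalso].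
    pose proof (exp_lb (65/100) ltac:(lra)).
    assert (exp (65/100) <= exp u) by (destruct H as [H|H]; [left; apply exp_increasing; lra| rewrite H; lra]).
    assert (Hc : 185/100 <= (1 + 65/100/8)^8) by (simpl; lra).
    assert (HE : 185/100 <= exp u) by lra.
    assert (H2 : (185/100)^2 <= (exp u)^2) by (apply pow_incr; lra).
    assert (/ (exp u)^2 <= / (185/100)^2) by (apply Rinv_le_contravar; [simpl; lra| exact H2]).
    simpl in *. lra. }
  assert (Hom : omega xi = u / cosh u) by (unfold omega; rewrite Hxu, Rinv_inv; field; split; lra).
  destruct sinh065 as [Hs1 Hs2].
  assert (Hz : sinh u < z0).
  { pose proof (sinh_le u (65/100) ltac:(lra)) as Hm.
    assert (sinh 0 <= sinh u) by (apply sinh_le; lra).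
    assert (sinh 0 = 0) by (unfold sinh; rewrite Ropp_0; lra).
    unfold z0. apply Rsqr_incrst_0.
    - rewrite Rsqr_sqrt. unfold Rsqr.
      assert (sinh u * sinh u <= sinh (65/100) * sinh (65/100)) by nra. simpl in Hs2. lra.
      assert (2 < sqrt 5). { apply Rsqr_incrst_0; try lra. 2: apply sqrt_pos. rewrite Rsqr_sqrt by lra. unfold Rsqr. lra. }
      lra.
    - lra.
    - apply sqrt_pos. }
  assert (Hub : forall s, sinh_set xi s -> s <= sinh u).
  { intros s [h [r [P [Hh [Hr [Hhr [[HP [HPr HPmax]] Hs]]]]]]].
    rewrite Hs. apply sinh_le. rewrite Hom in Hhr.
    set (a := h / r) in *.
    assert (Ha : 0 < a) by (unfold a; apply Rdiv_lt_0_compat; lra).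
    assert (Hcont : continuity (fun x => x / cosh x - a)).
    { intro x. apply (continuity_pt_minus (fun x => x / cosh x) (fun _ => a)).
      - apply (continuity_pt_div (fun y => y) cosh). apply cont_id. apply cont_cosh.
        pose proof (cosh_pos x). lra.
      - apply continuity_pt_const. intros y z; reflexivity. }
    destruct (IVT_cor _ 0 u Hcont ltac:(lra)) as [z [Hz1 Hz2]].
    { replace (0 / cosh 0) with 0 by (unfold Rdiv; ring).
      assert (0 <= u / cosh u - a) by lra. nra. }
    assert (Hza : z / cosh z = a) by lra.
    pose proof (cosh_pos z) as HCz.
    assert (Hzp : 0 < z).
    { destruct Hz1 as [[H|H] _]; [exact H|]. subst z. rewrite <- Hza in Ha.
      unfold Rdiv in Ha. rewrite Rmult_0_l in Ha. lra. }
    assert (Hhz : h * cosh z = r * z).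
    { replace h with (h / r * r) by (field; lra). fold a. rewrite <- Hza. field. lra. }
    assert (HQ : h / z <= P).
    { apply HPmax. apply Rdiv_lt_0_compat; lra.
      replace (h / (h / z)) with z by (field; split; lra).
      replace r with (r * z / z) by (field; lra). rewrite <- Hhz. field. lra. }
    assert (h <= P * z).
    { replace h with (h / z * z) by (field; lra). apply Rmult_le_compat_r; lra. }
    assert (h / P <= z).
    { replace z with (P * z / P) by (field; lra). unfold Rdiv.
      apply Rmult_le_compat_r. left; apply Rinv_0_lt_compat; lra. lra. }
    lra. }
  assert (Hne : sinh_set xi (sinh (1/2))).
  { exists (1/2), (cosh (1/2)), 1.
    pose proof (cosh_pos (1/2)) as HC2.
    split; [lra|]. split; [lra|]. split.
    { rewrite Hom. pose proof (g_mono (1/2) u ltac:(lra) ltac:(lra)).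
      apply (Rmult_le_reg_r (cosh (1/2) * cosh u)). nra.
      replace (1 / 2 / cosh (1 / 2) * (cosh (1 / 2) * cosh u)) with (1/2 * cosh u) by (field; lra).
      replace (u / cosh u * (cosh (1 / 2) * cosh u)) with (u * cosh (1/2)) by (field; lra).
      lra. }
    split.
    { split; [lra|]. split.
      - replace (1/2/1) with (1/2) by field. ring.
      - intros Q HQ HQe.
        destruct (Rle_or_lt Q 1) as [H|H]; [exact H|exfalso].
        set (t := 1/2/Q) in *.
        assert (Ht : 0 <= t < 1/2).
        { unfold t. split. left; apply Rdiv_lt_0_compat; lra.
          apply (Rmult_lt_reg_r Q); [lra|]. replace (1/2/Q*Q) with (1/2) by (field; lra). lra. }
        pose proof (g_mono t (1/2) Ht ltac:(lra)) as Hg.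
        rewrite <- HQe in Hg.
        assert (t * Q = 1/2) by (unfold t; field; lra).
        pose proof (cosh_pos t). nra. }
    - f_equal. field. }
  destruct (completeness (sinh_set xi)) as [m Hm].
  { exists (sinh u). intros s Hs. apply Hub; exact Hs. }
  { exists (sinh (1/2)). exact Hne. }
  exists m. split; [exact Hm|].
  assert (m <= sinh u) by (apply Hm; intros s Hs; apply Hub; exact Hs).
  lra.
Qed.
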